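(* Let $A$ be a complex square matrix, $y$ a complex vector, and $k\ge 1$ an integer. Suppose there is a polynomial $P(X)=c_1X+c_2X^2+\cdots+c_kX^k$ of degree at most $k$ with $P(0)=0$ such that the Hermitian part $H=\tfrac12\big(P(A)^*+P(A)\big)$ of $P(A)$ is positive definite or negative definite. Let $$\rho=\sqrt{1-\left[\frac{\min|\lambda(H)|}{\|P(A)\|_2}\right]^2}.$$ Then $\rho<1$, and for every vector $x_n$ the affine space $$x_n+\operatorname{span}\{r_n,\;Ar_n,\;A^2r_n,\;\ldots,\;A^{k-1}r_n\}$$ contains a vector $x_{n+1}$ with $\|r_{n+1}\|_2\le \rho\,\|r_n\|_2$. The same affine space also contains a vector $x_{n+1}$ (in general a different one) with $\|e_{n+1}\|_2\le\rho\,\|e_n\|_2$.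
   Context: For a vector $x_j$, its residual is $r_j=y-Ax_j$ and its error is $e_j=x_*-x_j$, where $x_*$ is the exact solution of $Ax=y$ (under the hypothesis, $P(A)=A(c_1I+c_2A+\cdots+c_kA^{k-1})$ is nonsingular, so $A$ is nonsingular). $\lambda(H)$ denotes the set of eigenvalues of $H$, so $\min|\lambda(H)|$ is the smallest absolute value of an eigenvalue of $H$. $\|\cdot\|_2$ is the Euclidean vector norm and the induced matrix norm; $M^*$ is the conjugate transpose. *)

(* Defs.v *)
From HB Require Import structures.
From mathcomp Require Import all_boot all_order all_algebra.
From mathcomp Require Import complex.
From mathcomp Require Import boolp classical_sets reals.
Set Implicit Arguments. Unset Strict Implicit. Unset Printing Implicit Defensive.
Import Order.TTheory GRing.Theory Num.Theory.
Local Open Scope ring_scope.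
Local Open Scope classical_set_scope.

Section Defs.
Variable R : realType.
Variable n : nat.

Definition ctrmx (p q : nat) (M : 'M[R[i]]_(p, q)) : 'M[R[i]]_(q, p) :=
  (map_mx (@conjc R) M)^T.

Definition vnorm2 (v : 'cV[R[i]]_n) : R :=
  Num.sqrt (\sum_(j < n) (ComplexField.Normc.normc (v j 0)) ^+ 2).

Definition opnorm2 (M : 'M[R[i]]_n) : R :=
  sup [set vnorm2 (M *m v) | v in [set v : 'cV[R[i]]_n | vnorm2 v = 1]].

Definition herm_part (M : 'M[R[i]]_n) : 'M[R[i]]_n :=
  (2%:R)^-1 *: (ctrmx M + M).

(* positive / negative definiteness (order on R[i]: real and positive/negative) *)
Definition posdef (M : 'M[R[i]]_n) : Prop :=
  forall v : 'cV[R[i]]_n, v != 0 -> 0 < (ctrmx v *m M *m v) 0 0.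
Definition negdef (M : 'M[R[i]]_n) : Prop :=
  forall v : 'cV[R[i]]_n, v != 0 -> (ctrmx v *m M *m v) 0 0 < 0.

Definition min_abs_eig (M : 'M[R[i]]_n) : R :=
  inf [set ComplexField.Normc.normc a | a in [set a : R[i] | eigenvalue M a]].

End Defs.

(* Main.v *)
Require Import Defs.
From HB Require Import structures.
From mathcomp Require Import all_boot all_order all_algebra.
From mathcomp Require Import complex spectral sesquilinear.
From mathcomp Require Import boolp classical_sets reals.
From mathcomp Require Import ring lra.
Import Order.TTheory GRing.Theory Num.Theory.
Set Implicit Arguments. Unset Strict Implicit. Unset Printing Implicit Defensive.
Local Open Scope ring_scope.

Section Helpers.
Variable R : realType.
Local Notation C := (R[i]).
Local Notation normc := (@ComplexField.Normc.normc R).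
Local Open Scope complex_scope.
Import Num.Def.

Lemma normc_sqrC (z : C) : ((normc z)^+2)%:C = conjc z * z.
Proof.
rewrite rmorphXn /=.
have -> : (normc z)%:C = `|z| by [].
by rewrite sqr_normc mulrC.
Qed.

Definition S0 n (v : 'cV[C]_n) := \sum_(j < n) normc (v j 0) ^+ 2.

Lemma S0C n (v : 'cV[C]_n) : (S0 v)%:C = (ctrmx v *m v) 0 0.
Proof.
rewrite mxE rmorph_sum; apply: eq_bigr => j _.
rewrite !mxE; exact: normc_sqrC.
Qed.

Lemma S0_ge0 n (v : 'cV[C]_n) : 0 <= S0 v.
Proof. by apply: sumr_ge0 => j _; rewrite sqr_ge0. Qed.

Lemma vnorm2E n (v : 'cV[C]_n) : vnorm2 v = Num.sqrt (S0 v).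
Proof. by []. Qed.

Lemma ctrmx_mul m n p (A : 'M[C]_(m, n)) (B : 'M[C]_(n, p)) :
  ctrmx (A *m B) = ctrmx B *m ctrmx A.
Proof. by rewrite /ctrmx map_mxM trmx_mul. Qed.

Lemma ctrmxK m n (A : 'M[C]_(m, n)) : ctrmx (ctrmx A) = A.
Proof. by apply/matrixP => i j; rewrite !mxE conjcK. Qed.

Lemma ctrmxD m n (A B : 'M[C]_(m, n)) : ctrmx (A + B) = ctrmx A + ctrmx B.
Proof. by apply/matrixP => i j; rewrite !mxE rmorphD. Qed.

Lemma ctrmxZ m n a (A : 'M[C]_(m, n)) : ctrmx (a *: A) = conjc a *: ctrmx A.
Proof. by apply/matrixP => i j; rewrite !mxE rmorphM. Qed.

Lemma ctrmxE m n (A : 'M[C]_(m, n)) : ctrmx A = (A ^t conjC)%sesqui.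
Proof. by apply/matrixP => i j; rewrite !mxE. Qed.

Lemma conjc_realC (x : R) : conjc (x%:C) = x%:C.
Proof. by rewrite conjc_real. Qed.


Lemma gt0_realC (z : C) : 0 < z -> exists r : R, 0 < r /\ z = r%:C.
Proof. case: z => a b; rewrite ltcE /= => /andP[/eqP hb ha]; exists a; split => //; by rewrite hb. Qed.

Lemma ge0_realC (z : C) : 0 <= z -> exists r : R, 0 <= r /\ z = r%:C.
Proof. case: z => a b; rewrite lecE /= => /andP[/eqP hb ha]; exists a; split => //; by rewrite hb. Qed.

Lemma normcR (x : R) : normc x%:C = `|x|.
Proof. by rewrite /= expr0n /= addr0 sqrtr_sqr. Qed.

Lemma normc_ge0 (z : C) : 0 <= normc z.
Proof. by case: z => a b /=; rewrite sqrtr_ge0. Qed.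

Lemma spectral_bound n (H : 'M[C]_n.+1) (s : R) : s ^+ 2 = 1 ->
  ctrmx H = H ->
  (forall v : 'cV[C]_n.+1, v != 0 -> 0 < s%:C * (ctrmx v *m H *m v) 0 0) ->
  0 < min_abs_eig H /\
  forall v : 'cV[C]_n.+1, exists g, 0 <= g /\
     (ctrmx v *m H *m v) 0 0 = (s * (min_abs_eig H * S0 v + g))%:C.
Proof.
move=> s2 hH Hpos.
have Hn : H \is normalmx by rewrite qualifE -ctrmxE hH.
set P := spectralmx H; set d := spectral_diag H.
have HE : H = invmx P *m diag_mx d *m P by apply/orthomx_spectralP.
have Pu : P \is unitarymx by apply: spectral_unitarymx.
have PPt : P *m ctrmx P = 1%:M by rewrite ctrmxE; apply/unitarymxP.
have PtP : ctrmx P *m P = 1%:M.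
  by rewrite ctrmxE -invmx_unitary // mulVmx // unitarymx_unit.
rewrite invmx_unitary // -ctrmxE in HE.
have PH : P *m H = diag_mx d *m P by rewrite HE !mulmxA PPt mul1mx.
have ss : s%:C * s%:C = 1 :> C by rewrite -rmorphM /= -expr2 s2.
have di : forall i, 0 < s%:C * d 0 i /\ eigenvalue H (d 0 i).
  move=> i; set x := row i P.
  have xx : (x *m ctrmx x) 0 0 = 1.
    have : (P *m ctrmx P) i i = 1 by rewrite PPt mxE eqxx.
    by move=> <-; rewrite !mxE; apply: eq_bigr => j _; rewrite !mxE.
  have xH : x *m H = d 0 i *: x.
    by rewrite /x -row_mul PH row_mul row_diag_mx -scalemxAl -rowE.
  have x0 : x != 0.
    by apply/eqP => hx; move: xx; rewrite hx mul0mx mxE => /eqP; rewrite eq_sym oner_eq0.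
  have cx0 : ctrmx x != 0.
    by apply: contra x0 => /eqP hx; rewrite -(ctrmxK x) hx; apply/eqP/matrixP => a b; rewrite !mxE conjc0.
  split; last by apply/eigenvalueP; exists x.
  have := Hpos _ cx0; rewrite ctrmxK xH.
  have -> : ((d 0 i *: x) *m ctrmx x) 0 0 = d 0 i by rewrite -scalemxAl mxE xx mulr1.
  by [].
pose del i := s * complex.Re (d 0 i).
have dE : forall i, 0 < del i /\ d 0 i = (s * del i)%:C.
  move=> i; have [/gt0_realC [r [r0 hr]] _] := di i.
  have hd : d 0 i = (s * r)%:C.
    have : s%:C * (s%:C * d 0 i) = s%:C * r%:C by rewrite hr.
    by rewrite mulrA ss mul1r => ->; rewrite rmorphM.
  by rewrite /del hd /= mulrA -expr2 s2 mul1r; split.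
have eigd : forall a, eigenvalue H a -> exists j, a = d 0 j.
  move=> a /eigenvalueP [x xHa x0].
  set z := x *m ctrmx P.
  have zD : z *m diag_mx d = a *: z.
    have : z *m diag_mx d *m P *m ctrmx P = a *: x *m ctrmx P.
      by rewrite -xHa HE !mulmxA.
    by rewrite -mulmxA PPt mulmx1 -scalemxAl.
  have z0 : z != 0.
    by apply: contra x0 => /eqP hz; rewrite -[x]mulmx1 -PtP mulmxA -/z hz mul0mx.
  have [j zj] : exists j, z 0 j != 0.
    apply/existsP; apply: contraR z0 => /existsPn h; apply/eqP/matrixP => a' b.
    by rewrite ord1; have := h b; rewrite negbK => /eqP ->; rewrite mxE.
  clearbody z; exists j; move/matrixP: zD => /(_ 0 j); rewrite mul_mx_diag !mxE => h.
  by apply: (mulIf zj); rewrite -h mulrC.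
set E := ([set normc a | a in [set a : C | eigenvalue H a]])%classic.
have mE : min_abs_eig H = inf E by [].
have lbE : has_lbound E by exists 0 => _ [a _ <-]; apply: normc_ge0.
have dm : forall i, min_abs_eig H <= del i.
  move=> i; rewrite mE; apply: ge_inf => //.
  exists (d 0 i); first by have [] := di i.
  have [h1 ->] := dE i; rewrite normcR normrM.
  by move: s2 => /eqP; rewrite sqrf_eq1 => /orP[] /eqP ->; rewrite ?normrN normr1 mul1r gtr0_norm.
split.
  have [i0 _ hmin] := @arg_minP _ R _ ord0 xpredT del isT.
  apply: (lt_le_trans (proj1 (dE i0))); rewrite mE; apply: lb_le_inf.
    by exists (normc (d 0 ord0)), (d 0 ord0) => //; have [] := di ord0.
  move=> _ [a /eigd [j ->] <-]; have [h1 ->] := dE j; rewrite normcR normrM.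
  have -> : `|s| = 1.
    by move: s2 => /eqP; rewrite sqrf_eq1 => /orP[] /eqP ->; rewrite ?normrN normr1.
  by rewrite mul1r gtr0_norm //; apply: hmin.
move=> v; set w := P *m v.
have Sw : S0 w = S0 v.
  apply: complexI; rewrite !S0C /w ctrmx_mul -!mulmxA [ctrmx P *m (P *m v)]mulmxA PtP mul1mx //.
have -> : (ctrmx v *m H *m v) = ctrmx w *m diag_mx d *m w.
  by rewrite /w ctrmx_mul HE !mulmxA.
clearbody w.
exists (\sum_j (del j - min_abs_eig H) * normc (w j 0) ^+ 2); split.
  by apply: sumr_ge0 => j _; rewrite mulr_ge0 ?sqr_ge0 // subr_ge0.
rewrite mxE -Sw /S0 mulr_sumr -big_split /= mulr_sumr rmorph_sum.
apply: eq_bigr => j _; rewrite mul_mx_diag !mxE.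
have [_ ->] := dE j.
rewrite -mulrDl addrC subrK.
have e := normc_sqrC (w j 0).
rewrite mulrAC -e mulrC !rmorphM /= mulrA.
by rewrite !mulrA.
Qed.


Lemma normc_sum (I : finType) (f : I -> C) :
  normc (\sum_i f i) <= \sum_i normc (f i).
Proof.
apply: (big_ind2 (fun x y => normc x <= y)) => //.
  by rewrite Normc.normc0.
move=> x1 x2 y1 y2 h1 h2; apply: le_trans (le_normcD _ _) _.
exact: lerD.
Qed.

Lemma S0_eq0 n (v : 'cV[C]_n) : S0 v = 0 -> v = 0.
Proof.
move=> h; apply/matrixP => j k; rewrite ord1 mxE.
have := psumr_eq0P (fun j _ => sqr_ge0 (normc (v j 0))) h (isT : true) (i := j).
by move/eqP; rewrite sqrf_eq0 => /eqP /Normc.eq0_normc.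
Qed.

Lemma vnorm2_ge0 n (v : 'cV[C]_n) : 0 <= vnorm2 v.
Proof. exact: sqrtr_ge0. Qed.

Lemma vnorm2_sqr n (v : 'cV[C]_n) : vnorm2 v ^+ 2 = S0 v.
Proof. by rewrite vnorm2E sqr_sqrtr // S0_ge0. Qed.

Lemma vnorm2_eq0 n (v : 'cV[C]_n) : vnorm2 v = 0 -> v = 0.
Proof. by move=> h; apply: S0_eq0; rewrite -vnorm2_sqr h expr0n. Qed.

Lemma vnorm2_0 n : vnorm2 (0 : 'cV[C]_n) = 0.
Proof.
rewrite vnorm2E /S0 big1 ?sqrtr0 // => j _.
by rewrite mxE Normc.normc0 expr0n.
Qed.

Lemma S0Z n (x : R) (v : 'cV[C]_n) : S0 (x%:C *: v) = x ^+ 2 * S0 v.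
Proof.
rewrite /S0 mulr_sumr; apply: eq_bigr => j _.
by rewrite mxE Normc.normcM normcR exprMn real_normK // num_real.
Qed.

Lemma vnorm2Z n (x : R) (v : 'cV[C]_n) : vnorm2 (x%:C *: v) = `|x| * vnorm2 v.
Proof. by rewrite !vnorm2E S0Z sqrtrM ?sqr_ge0 // sqrtr_sqr. Qed.

Lemma opnorm_bound n (M : 'M[C]_n.+1) (v : 'cV[C]_n.+1) :
  vnorm2 (M *m v) <= opnorm2 M * vnorm2 v.
Proof.
set E := ([set vnorm2 (M *m u) | u in [set u : 'cV[C]_n.+1 | vnorm2 u = 1]])%classic.
have hs : has_sup E.
  split.
    exists (vnorm2 (M *m delta_mx 0 0)), (delta_mx 0 0) => //=.
    rewrite vnorm2E /S0 big_ord_recl big1 => [|j _].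
      by rewrite !mxE /= !(expr1n, expr0n, addr0, sqrtr1).
    by rewrite !mxE /= !(expr0n, addr0, sqrtr0).
  exists (Num.sqrt (\sum_i (\sum_j normc (M i j)) ^+ 2)).
  move=> _ [u /= hu <-]; rewrite vnorm2E ler_sqrt; last first.
    by apply: sumr_ge0 => i _; apply: sqr_ge0.
  apply: ler_sum => i _.
  have hj : forall j, normc (u j 0) <= 1.
    move=> j; rewrite -(ler_pXn2r (isT : (0 < 2)%N)) ?nnegrE ?normc_ge0 //.
    rewrite -hu vnorm2_sqr /S0 (bigD1 j) //= lerDl.
    by apply: sumr_ge0 => k _; apply: sqr_ge0.
  have h1 : normc ((M *m u) i 0) <= \sum_j normc (M i j).
    rewrite mxE; apply: le_trans (normc_sum _) _; apply: ler_sum => j _.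
    rewrite Normc.normcM -[X in _ <= X]mulr1; apply: ler_wpM2l; first exact: normc_ge0.
    exact: hj.
  rewrite !expr2; apply: ler_pM => //; exact: normc_ge0.
have [t0|tn0] := eqVneq (vnorm2 v) 0.
  by rewrite (vnorm2_eq0 t0) mulmx0 vnorm2_0 mulr0.
have tp : 0 < vnorm2 v by rewrite lt_def tn0 vnorm2_ge0.
set t := vnorm2 v in tn0 tp *.
have hu : vnorm2 ((t^-1)%:C *: v) = 1.
  by rewrite vnorm2Z -/t gtr0_norm ?invr_gt0 // mulVf.
have := sup_upper_bound hs (ex_intro2 _ _ _ hu erefl).
rewrite -scalemxAr vnorm2Z gtr0_norm ?invr_gt0 // => h.
have -> : vnorm2 (M *m v) = t * (t^-1 * vnorm2 (M *m v)) by rewrite mulrA mulfV ?mul1r.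
by rewrite [X in _ <= X]mulrC ler_pM2l.
Qed.


Lemma herm_ct n (P : 'M[C]_n) : ctrmx (herm_part P) = herm_part P.
Proof.
by rewrite /herm_part ctrmxZ ctrmxD ctrmxK addrC conjc_inv conjc_nat.
Qed.

Lemma conjcD (x y : C) : conjc (x + y) = conjc x + conjc y.
Proof. exact: rmorphD. Qed.
Lemma conjcM (x y : C) : conjc (x * y) = conjc x * conjc y.
Proof. exact: rmorphM. Qed.

Lemma S0_comb n (v w : 'cV[C]_n) (c : C) : conjc c = c ->
  (S0 (v + c *: w))%:C = (S0 v)%:C + c * ((ctrmx w *m v) 0 0 + (ctrmx v *m w) 0 0)
     + c ^+ 2 * (S0 w)%:C.
Proof.
move=> hc.
rewrite !S0C !mxE -!big_split /= !mulr_sumr -big_split /=.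
rewrite -big_split /=; apply: eq_bigr => j _; rewrite !mxE conjcD conjcM hc.
ring.
Qed.

Lemma herm_form n (P : 'M[C]_n) (v : 'cV[C]_n) :
  (ctrmx v *m herm_part P *m v) 0 0 =
  2^-1 * ((ctrmx (P *m v) *m v) 0 0 + (ctrmx v *m (P *m v)) 0 0).
Proof.
rewrite /herm_part -scalemxAr -scalemxAl mulmxDr mulmxDl ctrmx_mul !mulmxA.
by rewrite [LHS]mxE [X in _ * X]mxE.
Qed.

Lemma ctrmx0 m n : ctrmx (0 : 'M[C]_(m, n)) = 0.
Proof. by apply/matrixP => i j; rewrite !mxE conjc0. Qed.

Lemma rcD (x y : R) : (x + y)%:C = x%:C + y%:C :> C. Proof. exact: rmorphD. Qed.
Lemma rcM (x y : R) : (x * y)%:C = x%:C * y%:C :> C. Proof. exact: rmorphM. Qed.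
Lemma rcN (x : R) : (- x)%:C = - x%:C :> C. Proof. exact: rmorphN. Qed.
Lemma rcX (x : R) k : (x ^+ k)%:C = x%:C ^+ k :> C. Proof. exact: rmorphXn. Qed.
Lemma rc2 : (2 : R)%:C = 2 :> C. Proof. exact: (rmorph_nat (real_complex R) 2). Qed.

Lemma key n (P : 'M[C]_n.+1) (s : R) : s ^+ 2 = 1 ->
  (forall v : 'cV[C]_n.+1, v != 0 -> 0 < s%:C * (ctrmx v *m herm_part P *m v) 0 0) ->
  0 < min_abs_eig (herm_part P) /\ 0 < opnorm2 P /\
  forall v : 'cV[C]_n.+1,
    vnorm2 (v - (s * min_abs_eig (herm_part P) / opnorm2 P ^+ 2)%:C *: (P *m v))
     <= Num.sqrt (1 - (min_abs_eig (herm_part P) / opnorm2 P) ^+ 2) * vnorm2 v.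
Proof.
move=> s2 hpos.
have [m0 hv] := spectral_bound s2 (herm_ct P) hpos.
set m := min_abs_eig (herm_part P) in m0 hv *.
set N := opnorm2 P.
have N0 : 0 < N.
  have [Nle|//] := lerP N 0.
  have hP : forall v : 'cV[C]_n.+1, P *m v = 0.
    move=> v; apply: vnorm2_eq0; apply/eqP; rewrite eq_le vnorm2_ge0 andbT.
    apply: le_trans (opnorm_bound P v) _.
    by rewrite mulr_le0_ge0 // vnorm2_ge0.
  set e := delta_mx 0 0 : 'cV[C]_n.+1.
  have e0 : e != 0.
    by apply/eqP => /matrixP /(_ 0 0); rewrite !mxE /= => /eqP; rewrite oner_eq0.
  have := hpos e e0; rewrite herm_form hP ctrmx0 mul0mx mulmx0 mxE addr0 mulr0 mulr0.
  by rewrite ltxx.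
split => //; split => // v.
have [g [g0 hg]] := hv v.
set a := s * m / N ^+ 2.
set w := P *m v.
have hsum : (ctrmx w *m v) 0 0 + (ctrmx v *m w) 0 0 = 2 * (s * (m * S0 v + g))%:C.
  by rewrite -hg herm_form mulrA mulfV ?mul1r // pnatr_eq0.
have expand : S0 (v - a%:C *: w) = S0 v - 2 * a * s * (m * S0 v + g) + a ^+ 2 * S0 w.
  apply: complexI.
  have -> : v - a%:C *: w = v + (- a)%:C *: w by rewrite rcN scaleNr.
  rewrite S0_comb; last exact: conjc_real.
  rewrite hsum -rc2 -!rcM -rcX -!rcD -rcM -rcD; apply: congr1; ring.
set q := m / N.
set k := m / N ^+ 2.
have k0 : 0 <= k by rewrite divr_ge0 // ?ltW // exprn_gt0.
have hSw : S0 w <= N ^+ 2 * S0 v.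
  rewrite -!vnorm2_sqr -exprMn !expr2.
  have hb := opnorm_bound P v.
  by apply: ler_pM => //; apply: vnorm2_ge0.
have ha : a * s = k by rewrite /a /k mulrC !mulrA -expr2 s2 mul1r.
have ha2 : a ^+ 2 = k ^+ 2 by rewrite /a /k -mulrA exprMn s2 mul1r.
have hkm : k * m = q ^+ 2.
  by rewrite /k /q; field; rewrite gt_eqF.
have hkN : k ^+ 2 * N ^+ 2 = q ^+ 2.
  by rewrite /k /q; field; rewrite gt_eqF.
have h1 : k ^+ 2 * S0 w <= q ^+ 2 * S0 v.
  rewrite -hkN -mulrA; apply: ler_wpM2l => //; exact: sqr_ge0.
have h2 : 0 <= k * g by apply: mulr_ge0.
have h3 : k * m * S0 v = q ^+ 2 * S0 v by rewrite hkm.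
have exp2 : S0 (v - a%:C *: w) = S0 v - 2 * (k * m * S0 v) - 2 * (k * g) + k ^+ 2 * S0 w.
  by rewrite expand -ha2 -ha; ring.
have hS : S0 (v - a%:C *: w) <= (1 - q ^+ 2) * S0 v.
  rewrite exp2 mulrBl mul1r; lra.
have Sv0 := S0_ge0 v.
rewrite !vnorm2E.
have [hq|hq] := lerP 0 (1 - q ^+ 2).
  by rewrite -sqrtrM // ler_sqrt // mulr_ge0.
have hS' : S0 (v - a%:C *: w) <= 0.
  by apply: (le_trans hS); rewrite mulr_le0_ge0 // ltW.
by rewrite (ler0_sqrtr hS') (ler0_sqrtr (ltW hq)) mul0r.
Qed.

Lemma rc1 : (1 : R)%:C = 1 :> C. Proof. exact: rmorph1. Qed.
End Helpers.

Theorem theorem1 (R : realType) (n k : nat) (A : 'M[R[i]]_n.+1)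
  (y : 'cV[R[i]]_n.+1) (c : 'I_k -> R[i]) :
  (0 < k)%N ->
  let PA := \sum_(j < k) c j *: A ^+ j.+1 in
  let H := herm_part PA in
  posdef H \/ negdef H ->
  let rho := Num.sqrt (1 - (min_abs_eig H / opnorm2 PA) ^+ 2) in
  rho < 1 /\
  (forall xn : 'cV[R[i]]_n.+1,
     exists a : 'I_k -> R[i],
       let xn1 := xn + \sum_(j < k) a j *: (A ^+ j *m (y - A *m xn)) in
       vnorm2 (y - A *m xn1) <= rho * vnorm2 (y - A *m xn)) /\
  (forall xs : 'cV[R[i]]_n.+1, A *m xs = y ->
   forall xn : 'cV[R[i]]_n.+1,
     exists a : 'I_k -> R[i],
       let xn1 := xn + \sum_(j < k) a j *: (A ^+ j *m (y - A *m xn)) in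
       vnorm2 (xs - xn1) <= rho * vnorm2 (xs - xn)).
Proof.
move=> k0 PA H hdef rho.
have [s [s2 hpos]] : exists s : R, s ^+ 2 = 1 /\
    forall v : 'cV[R[i]]_n.+1, v != 0 ->
      0 < real_complex R s * (ctrmx v *m herm_part PA *m v) 0 0.
  case: hdef => h; [exists 1 | exists (-1)]; split; rewrite ?sqrrN ?expr1n //.
    by move=> v /h; rewrite rc1 mul1r.
  by move=> v /h; rewrite rcN rc1 mulN1r oppr_gt0.
have [m0 [N0 hk]] := key s2 hpos.
set al := real_complex R (s * min_abs_eig (herm_part PA) / opnorm2 PA ^+ 2) in hk.
split.
  rewrite /rho; set q := min_abs_eig H / opnorm2 PA.
  have q0 : 0 < q by rewrite divr_gt0.
  have [hq|hq] := lerP (1 - q ^+ 2) 0.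
    by rewrite ler0_sqrtr.
  rewrite -[X in _ < X]sqrtr1 ltr_sqrt //.
  have : 0 < q ^+ 2 by rewrite exprn_gt0.
  lra.
have eA : forall j, A *m A ^+ j = A ^+ j.+1 by move=> j; rewrite exprS mulmxE.
have eA' : forall j, A ^+ j *m A = A ^+ j.+1 by move=> j; rewrite exprSr mulmxE.
have E1 : forall u : 'cV[R[i]]_n.+1, \sum_(j < k) (al * c j) *: (A ^+ j.+1 *m u) = al *: (PA *m u).
  move=> u; rewrite /PA mulmx_suml scaler_sumr; apply: eq_bigr => j _.
  by rewrite -scalemxAl scalerA.
split.
  move=> xn; exists (fun j => al * c j); cbv zeta.
  set r := y - A *m xn.
  have -> : y - A *m (xn + \sum_(j < k) (al * c j) *: (A ^+ j *m r)) = r - al *: (PA *m r).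
    rewrite mulmxDr opprD addrA -E1 mulmx_sumr; congr (_ - _).
    by apply: eq_bigr => j _; rewrite -scalemxAr mulmxA eA.
  exact: hk.
move=> xs hxs xn; exists (fun j => al * c j); cbv zeta.
set e := xs - xn.
have hr : y - A *m xn = A *m e by rewrite /e mulmxBr hxs.
have -> : xs - (xn + \sum_(j < k) (al * c j) *: (A ^+ j *m (y - A *m xn))) = e - al *: (PA *m e).
  rewrite hr opprD addrA -E1; congr (_ - _).
  by apply: eq_bigr => j _; rewrite mulmxA eA'.
exact: hk.
Qed.
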